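(* Let $N\ge 3$ and define, for a function $V$ of $s>0$, $$\mathcal{L}V:=(5-N)V_s s^2+\tfrac12 V_s-V_sVs^2-2(N-2)Vs+(N-2)V^2s.$$ For every $m>0$ there exists $L_m>0$ such that the problem $\mathcal{L}\tilde V=0$ for $s>0$, $\tilde V(0)=m$, admits a unique classical solution $\tilde V\in C^2([0,L_m])$, and this solution satisfies $\tilde V_s(0)=0$ and $(2-m)\tilde V_{ss}(s)\ge (N-2)m(2-m)^2$ for $s\in[0,L_m]$. *)

(* Defs.v *)
From Stdlib Require Import Reals.
Open Scope R_scope.

Definition has_deriv_on (a b : R) (f f' : R -> R) : Prop :=
  forall x, a <= x <= b ->
  forall eps, 0 < eps -> exists delta, 0 < delta /\
    forall y, a <= y <= b -> y <> x -> Rabs (y - x) < delta ->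
      Rabs ((f y - f x) / (y - x) - f' x) < eps.

Definition cont_on (a b : R) (g : R -> R) : Prop :=
  forall x, a <= x <= b ->
  forall eps, 0 < eps -> exists delta, 0 < delta /\
    forall y, a <= y <= b -> Rabs (y - x) < delta -> Rabs (g y - g x) < eps.

Definition C2_on (a b : R) (V V1 V2 : R -> R) : Prop :=
  has_deriv_on a b V V1 /\ has_deriv_on a b V1 V2 /\ cont_on a b V2.

Definition Lop (N : nat) (s v vs : R) : R :=
  (5 - INR N) * vs * s ^ 2 + / 2 * vs - vs * v * s ^ 2
  - 2 * (INR N - 2) * v * s + (INR N - 2) * v ^ 2 * s.

Definition is_solution (N : nat) (m L : R) (V V1 V2 : R -> R) : Prop :=
  C2_on 0 L V V1 V2 /\ V 0 = m /\
  forall s, 0 < s <= L -> Lop N s (V s) (V1 s) = 0.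

(* Main.v *)
Require Import Defs.
From Stdlib Require Import Reals Lra ClassicalEpsilon.
From Coquelicot Require Import Coquelicot.
From Stdlib Require Import Ranalysis5.
Open Scope R_scope.

Lemma cpt_plus f g x : continuity_pt f x -> continuity_pt g x -> continuity_pt (fun y => f y + g y) x.
Proof. intros; exact (continuity_pt_plus f g x H H0). Qed.
Lemma cpt_minus f g x : continuity_pt f x -> continuity_pt g x -> continuity_pt (fun y => f y - g y) x.
Proof. intros; exact (continuity_pt_minus f g x H H0). Qed.
Lemma cpt_mult f g x : continuity_pt f x -> continuity_pt g x -> continuity_pt (fun y => f y * g y) x.
Proof. intros; exact (continuity_pt_mult f g x H H0). Qed.
Lemma cpt_inv f x : continuity_pt f x -> f x <> 0 -> continuity_pt (fun y => / f y) x.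
Proof. intros; exact (continuity_pt_inv f x H H0). Qed.
Lemma cpt_const c x : continuity_pt (fun _ => c) x.
Proof. apply continuity_pt_const. intros a b; reflexivity. Qed.
Lemma cpt_id x : continuity_pt (fun y => y) x.
Proof. apply continuity_pt_id. Qed.

Lemma deriv_two_sided_on a b f f' :
  (forall x, a <= x <= b -> derivable_pt_lim f x (f' x)) -> has_deriv_on a b f f'.
Proof.
  intros H x Hx eps He. destruct (H x Hx eps He) as [d Hd].
  exists d. split; [apply cond_pos|]. intros y Hy Hyx Hd'.
  specialize (Hd (y - x)). replace (x + (y - x)) with y in Hd by ring.
  apply Hd; [intro; apply Hyx; lra | assumption].
Qed.

Lemma cont_two_sided_on a b g :
  (forall x, a <= x <= b -> continuity_pt g x) -> cont_on a b g.
Proof.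
  intros H x Hx eps He. destruct (H x Hx eps He) as [d [Hd1 Hd2]].
  exists d. split; [exact Hd1|]. intros y Hy Hyd.
  destruct (Req_dec y x) as [->|Hne].
  - rewrite Rminus_eq_0, Rabs_R0; exact He.
  - apply (Hd2 y). split; [split; [exact I| auto] | exact Hyd].
Qed.

Definition relcont a b g x := forall eps, 0 < eps -> exists delta, 0 < delta /\
    forall y, a <= y <= b -> Rabs (y - x) < delta -> Rabs (g y - g x) < eps.

Lemma deriv_relcont a b f f' : has_deriv_on a b f f' ->
  forall x, a <= x <= b -> relcont a b f x.
Proof.
  intros H x Hx eps He.
  destruct (H x Hx 1 Rlt_0_1) as [d [Hd Hd2]].
  set (M := 1 + Rabs (f' x)).
  assert (HM : 0 < M) by (unfold M; pose proof (Rabs_pos (f' x)); lra).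
  exists (Rmin d (eps / M)). split.
  { apply Rmin_pos; [lra| apply Rdiv_lt_0_compat; lra]. }
  intros y Hy Hyd.
  destruct (Req_dec y x) as [->|Hne].
  - rewrite Rminus_eq_0, Rabs_R0; exact He.
  - assert (Hyd1 : Rabs (y - x) < d) by (eapply Rlt_le_trans; [exact Hyd| apply Rmin_l]).
    assert (Hyd2 : Rabs (y - x) < eps / M) by (eapply Rlt_le_trans; [exact Hyd| apply Rmin_r]).
    specialize (Hd2 y Hy Hne Hyd1).
    assert (Hq : Rabs ((f y - f x) / (y - x)) < M).
    { unfold M. 
      replace ((f y - f x) / (y - x)) with (((f y - f x) / (y - x) - f' x) + f' x) by ring.
      eapply Rle_lt_trans; [apply Rabs_triang|]. lra. }
    replace (f y - f x) with ((f y - f x) / (y - x) * (y - x)) by (field; lra).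
    rewrite Rabs_mult.
    assert (Hyx : 0 < Rabs (y - x)) by (apply Rabs_pos_lt; lra).
    apply Rle_lt_trans with (M * Rabs (y - x)).
    + apply Rmult_le_compat_r; [lra|]. lra.
    + apply Rlt_le_trans with (M * (eps / M)).
      * apply Rmult_lt_compat_l; lra.
      * right; field; lra.
Qed.

Definition clamp (a b x : R) := Rmax a (Rmin b x).

Lemma clamp_in a b x : a <= b -> a <= clamp a b x <= b.
Proof. intros; unfold clamp, Rmax, Rmin; repeat destruct Rle_dec; lra. Qed.
Lemma clamp_id a b x : a <= x <= b -> clamp a b x = x.
Proof. intros; unfold clamp, Rmax, Rmin; repeat destruct Rle_dec; lra. Qed.
Lemma clamp_lip a b x y : a <= b -> Rabs (clamp a b y - clamp a b x) <= Rabs (y - x).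
Proof.
  intros; unfold clamp, Rmax, Rmin; repeat destruct Rle_dec;
  unfold Rabs; repeat destruct Rcase_abs; lra.
Qed.

Lemma clamp_cont a b g : a <= b -> (forall x, a <= x <= b -> relcont a b g x) ->
  forall x, continuity_pt (fun y => g (clamp a b y)) x.
Proof.
  intros Hab H x eps He.
  destruct (H (clamp a b x) (clamp_in a b x Hab) eps He) as [d [Hd Hd2]].
  exists d. split; [exact Hd|]. intros y [_ Hy]. simpl in *. unfold R_dist in *.
  apply Hd2; [apply clamp_in; exact Hab|].
  eapply Rle_lt_trans; [apply clamp_lip; exact Hab| exact Hy].
Qed.

Lemma clamp_deriv a b f f' : has_deriv_on a b f f' ->
  forall x, a < x < b -> derivable_pt_lim (fun y => f (clamp a b y)) x (f' x).
Proof.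
  intros H x Hx eps He.
  destruct (H x ltac:(lra) eps He) as [d [Hd Hd2]].
  assert (Hp : 0 < Rmin d (Rmin (x - a) (b - x))).
  { apply Rmin_pos; [lra| apply Rmin_pos; lra]. }
  exists (mkposreal _ Hp). intros h Hh Hhd. simpl in Hhd.
  pose proof (Rmin_l d (Rmin (x - a) (b - x))).
  pose proof (Rmin_r d (Rmin (x - a) (b - x))).
  pose proof (Rmin_l (x - a) (b - x)). pose proof (Rmin_r (x - a) (b - x)).
  assert (Hh2 : Rabs h < x - a /\ Rabs h < b - x) by lra.
  rewrite (clamp_id a b x) by lra.
  rewrite (clamp_id a b (x + h)) by (destruct Hh2; unfold Rabs in *; destruct Rcase_abs; lra).
  specialize (Hd2 (x + h)).
  replace (x + h - x) with h in Hd2 by ring.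
  apply Hd2; [ destruct Hh2; unfold Rabs in *; destruct Rcase_abs; lra | lra | lra].
Qed.

Definition Dv N s v := /2 + (5 - INR N - v) * s^2.

Lemma Lop_eq N s v vs : Lop N s v vs = vs * Dv N s v - (INR N - 2) * s * v * (2 - v).
Proof. unfold Lop, Dv. ring. Qed.

Lemma INR_ge3 N : (3 <= N)%nat -> 3 <= INR N.
Proof. intros H. apply le_INR in H. simpl in H. lra. Qed.

Lemma sol_D_pos N m L W W1 W2 : (3 <= N)%nat -> 0 < L -> INR N * L^2 <= /4 ->
  is_solution N m L W W1 W2 -> forall s, 0 <= s <= L -> 0 < Dv N s (W s).
Proof.
  intros HN HL HNL [[HdW [HdW1 HcW2]] [HW0 HE]].
  pose proof (INR_ge3 N HN) as HN3.
  assert (HWc : forall x, continuity_pt (fun y => W (clamp 0 L y)) x).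
  { apply clamp_cont; [lra|]. apply (deriv_relcont _ _ _ _ HdW). }
  set (g := fun x => /2 + (5 - INR N - W (clamp 0 L x)) * (x * x)).
  assert (Hg : continuity g).
  { intro x. unfold g. apply cpt_plus; [apply cpt_const|].
    apply cpt_mult; [apply cpt_minus; [apply cpt_const| apply HWc]|].
    apply cpt_mult; apply cpt_id. }
  assert (HgD : forall s, 0 <= s <= L -> g s = Dv N s (W s)).
  { intros s Hs. unfold g, Dv. rewrite clamp_id by lra. ring. }
  assert (Hnz : forall s, 0 < s <= L -> g s <> 0).
  { intros s Hs Hg0. rewrite HgD in Hg0 by lra.
    pose proof (HE s Hs) as Hl. rewrite Lop_eq, Hg0 in Hl.
    assert (Hk : (INR N - 2) * s * (W s * (2 - W s)) = 0) by lra.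
    apply Rmult_integral in Hk. destruct Hk as [Hk|Hk].
    - apply Rmult_integral in Hk; destruct Hk; lra.
    - assert (Hs2 : s^2 <= L^2) by (apply pow_incr; lra).
      assert (HNs : INR N * s^2 <= /4).
      { eapply Rle_trans; [|exact HNL]. apply Rmult_le_compat_l; lra. }
      assert (0 <= s^2) by (apply pow2_ge_0).
      unfold Dv in Hg0.
      apply Rmult_integral in Hk; destruct Hk as [Hk|Hk].
      + rewrite Hk in Hg0. nra.
      + assert (W s = 2) by lra. rewrite H0 in Hg0. nra. }
  intros s Hs. rewrite <- HgD by exact Hs.
  destruct (Req_dec s 0) as [->|Hs0].
  { unfold g. lra. }
  destruct (Rlt_le_dec 0 (g s)) as [Hp|Hp]; [exact Hp|].
  exfalso.
  assert (Hneg : g s < 0) by (destruct Hp; [lra| exfalso; apply (Hnz s); lra]).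
  assert (Hc : continuity (fun x => - g x)).
  { intro x. apply (continuity_pt_opp g x (Hg x)). }
  destruct (IVT (fun x => - g x) 0 s Hc ltac:(lra) ltac:(unfold g; lra) ltac:(lra)) as [z [Hz1 Hz2]].
  destruct (Req_dec z 0) as [->|Hz0].
  - unfold g in Hz2. lra.
  - apply (Hnz z); lra.
Qed.

Lemma h_deriv (A B : R -> R) a b K x : is_derive A x a -> is_derive B x b ->
  is_derive (fun y => (A y - B y) * (A y - B y) * exp (-(2 * K * y))) x
    (2 * (A x - B x) * (a - b) * exp (-(2 * K * x)) + (A x - B x) * (A x - B x) * (-(2 * K)) * exp (-(2 * K * x))).
Proof.
  intros HA HB. auto_derive.
  - repeat split; eexists; eassumption.
  - replace (Derive (fun x0 : R => A x0) x) with a by (symmetry; apply is_derive_unique; exact HA).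
    replace (Derive (fun x0 : R => B x0) x) with b by (symmetry; apply is_derive_unique; exact HB). ring.
Qed.

Lemma exp_cpt K x : continuity_pt (fun y => exp (-(2 * K * y))) x.
Proof.
  apply derivable_continuous_pt. exists (exp (-(2 * K * x)) * (-(2*K))).
  apply is_derive_Reals. auto_derive; [exact I| ring].
Qed.

Lemma uniq N m L W W1 W2 V V1 V2 : (3 <= N)%nat -> 0 < L -> INR N * L^2 <= /4 ->
  is_solution N m L W W1 W2 -> is_solution N m L V V1 V2 ->
  forall s, 0 <= s <= L -> W s = V s.
Proof.
  intros HN HL HNL SW SV.
  pose proof (sol_D_pos N m L W W1 W2 HN HL HNL SW) as DW.
  pose proof (sol_D_pos N m L V V1 V2 HN HL HNL SV) as DV.
  destruct SW as [[HdW [HdW1 HcW2]] [HW0 HEW]].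
  destruct SV as [[HdV [HdV1 HcV2]] [HV0 HEV]].
  pose proof (INR_ge3 N HN) as HN3.
  set (Wc := fun y => W (clamp 0 L y)).
  set (Vc := fun y => V (clamp 0 L y)).
  assert (HWc : forall x, continuity_pt Wc x).
  { apply clamp_cont; [lra|]. apply (deriv_relcont _ _ _ _ HdW). }
  assert (HVc : forall x, continuity_pt Vc x).
  { apply clamp_cont; [lra|]. apply (deriv_relcont _ _ _ _ HdV). }
  assert (HWd : forall x, 0 < x < L -> derivable_pt_lim Wc x (W1 x)) by (apply clamp_deriv; exact HdW).
  assert (HVd : forall x, 0 < x < L -> derivable_pt_lim Vc x (V1 x)) by (apply clamp_deriv; exact HdV).
  assert (EW : forall x, 0 <= x <= L -> Wc x = W x) by (intros; unfold Wc; rewrite clamp_id; auto).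
  assert (EV : forall x, 0 <= x <= L -> Vc x = V x) by (intros; unfold Vc; rewrite clamp_id; auto).
  set (k := INR N - 2). set (c := 5 - INR N).
  set (Lam := fun x => k * x * ((/2 + c * (x * x)) * (2 - Wc x - Vc x) + (x * x) * Wc x * Vc x)
          * / (/2 + (c - Wc x) * (x * x)) * / (/2 + (c - Vc x) * (x * x))).
  assert (HLc : forall x, 0 <= x <= L -> continuity_pt Lam x).
  { intros x Hx. unfold Lam.
    assert (D1 : /2 + (c - Wc x) * (x * x) <> 0).
    { rewrite EW by lra. pose proof (DW x Hx). unfold Dv in H. unfold c. 
      replace (x*x) with (x^2) by ring. lra. }
    assert (D2 : /2 + (c - Vc x) * (x * x) <> 0).
    { rewrite EV by lra. pose proof (DV x Hx). unfold Dv in H. unfold c. 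
      replace (x*x) with (x^2) by ring. lra. }
    repeat apply cpt_mult.
    - apply cpt_const.
    - apply cpt_id.
    - apply cpt_plus.
      + apply cpt_mult; [apply cpt_plus; [apply cpt_const| apply cpt_mult; [apply cpt_const| apply cpt_mult; apply cpt_id]]|].
        apply cpt_minus; [apply cpt_minus; [apply cpt_const| apply HWc]| apply HVc].
      + repeat apply cpt_mult; try apply cpt_id; auto.
    - apply cpt_inv; [| exact D1].
      apply cpt_plus; [apply cpt_const|]. apply cpt_mult; [apply cpt_minus; [apply cpt_const| apply HWc]|].
      apply cpt_mult; apply cpt_id.
    - apply cpt_inv; [| exact D2].
      apply cpt_plus; [apply cpt_const|]. apply cpt_mult; [apply cpt_minus; [apply cpt_const| apply HVc]|].
      apply cpt_mult; apply cpt_id. }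
  destruct (continuity_ab_maj Lam 0 L ltac:(lra) HLc) as [Mx [HMx _]].
  set (K := Lam Mx).
  assert (Hkey : forall x, 0 < x < L -> W1 x - V1 x = Lam x * (Wc x - Vc x)).
  { intros x Hx. pose proof (HEW x ltac:(lra)) as H1. pose proof (HEV x ltac:(lra)) as H2.
    pose proof (DW x ltac:(lra)) as D1. pose proof (DV x ltac:(lra)) as D2.
    rewrite Lop_eq in H1, H2. unfold Lam. rewrite EW, EV by lra.
    unfold Dv in *. fold c in D1, D2, H1, H2. fold k in H1, H2.
    replace (x^2) with (x*x) in * by ring.
    set (d1 := / 2 + (c - W x) * (x * x)) in *. set (d2 := / 2 + (c - V x) * (x * x)) in *.
    assert (E1 : W1 x = (k*x*W x*(2-W x)) / d1).
    { apply (Rmult_eq_reg_r d1); [| lra]. unfold Rdiv. rewrite Rmult_assoc, Rinv_l by lra. lra. }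
    assert (E2 : V1 x = (k*x*V x*(2-V x)) / d2).
    { apply (Rmult_eq_reg_r d2); [| lra]. unfold Rdiv. rewrite Rmult_assoc, Rinv_l by lra. lra. }
    rewrite E1, E2. assert (d1 <> 0) by lra. assert (d2 <> 0) by lra. unfold d1, d2 in *. field.
split; [contradict H0 | contradict H]; lra.
  }
  intros s Hs.
  destruct (Req_dec s 0) as [->|Hs0]; [congruence|].
  set (h := fun y => (Wc y - Vc y) * (Wc y - Vc y) * exp (-(2 * K * y))).
  set (h' := fun y => 2 * (Wc y - Vc y) * (W1 y - V1 y) * exp (-(2 * K * y)) + (Wc y - Vc y) * (Wc y - Vc y) * (-(2 * K)) * exp (-(2 * K * y))).
  assert (Hhd : forall y, 0 < y < L -> derivable_pt_lim h y (h' y)).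
  { intros y Hy. apply is_derive_Reals. apply (h_deriv Wc Vc); apply is_derive_Reals; auto. }
  assert (pr1 : forall c0, 0 < c0 < s -> derivable_pt h c0).
  { intros c0 Hc0. exists (h' c0). apply Hhd; lra. }
  assert (Hch : forall c0, 0 <= c0 <= s -> continuity_pt h c0).
  { intros c0 _. unfold h. apply cpt_mult; [apply cpt_mult; apply cpt_minus; auto|apply exp_cpt]. }
  assert (Hcid : forall c0, 0 <= c0 <= s -> continuity_pt id c0).
  { intros c0 _. exact (continuity_pt_id c0). }
  destruct (MVT h id 0 s pr1 (fun c0 _ => derivable_pt_id c0) ltac:(lra) Hch Hcid) as [c0 [P Heq]].
  rewrite (derive_pt_eq_0 h c0 (h' c0) (pr1 c0 P) (Hhd c0 ltac:(lra))) in Heq.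
  rewrite (derive_pt_eq_0 id c0 1 _ (derivable_pt_lim_id c0)) in Heq.
  unfold id in Heq.
  assert (Hh0 : h 0 = 0).
  { unfold h. rewrite EW, EV by lra. rewrite HW0, HV0. ring. }
  assert (Hh'c : h' c0 <= 0).
  { unfold h'. rewrite Hkey by lra.
    set (e := Wc c0 - Vc c0). pose proof (exp_pos (-(2 * K * c0))) as Hex.
    set (ex := exp (-(2 * K * c0))) in *.
    assert (0 <= e * e * ex) by (apply Rmult_le_pos; [nra| lra]).
    assert (Lam c0 <= K) by (apply HMx; lra).
    replace (2 * e * (Lam c0 * e) * ex + e * e * - (2 * K) * ex) with (2 * (e * e * ex) * (Lam c0 - K)) by ring.
    nra. }
  rewrite Hh0 in Heq.
  assert (Hsp : 0 < s) by (destruct Hs as [[H|H] _]; [exact H| congruence]).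
  assert (Hhs : h s <= 0).
  { replace (h s) with (s * h' c0) by lra. 
    rewrite <- (Rmult_0_r s). apply Rmult_le_compat_l; lra. }
  unfold h in Hhs. pose proof (exp_pos (-(2 * K * s))) as Hex.
  set (e := Wc s - Vc s) in Hhs.
  assert (Hee : e * e <= 0).
  { apply (Rmult_le_reg_r (exp (-(2 * K * s)))); [exact Hex|]. lra. }
  assert (Hz : Wc s - Vc s = 0) by (fold e; nra).
  rewrite EW, EV in Hz by lra. lra.
Qed.

Definition Qf k v := / (k * v * (2 - v)).
Definition Rf k v := (2 * (3 - k) - 2 * v) / (k * v * (2 - v)).
Definition Ef k v := exp ((3 - k) / k * ln v + (k - 1) / (2 * k) * ln ((2 - v) ^ 2)).
Definition If k v := Qf k v / Ef k v.
Definition Gf k m v := RInt (If k) m v.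
Definition uf k m v := Ef k v * Gf k m v.

Lemma E_deriv k v : 0 < k -> 0 < v -> v <> 2 -> is_derive (Ef k) v (Rf k v * Ef k v).
Proof.
  intros Hk Hv Hv2. unfold Ef, Rf.
  assert (H2 : 0 < (2 - v) ^ 2) by (apply pow2_gt_0 ; lra).
  assert (2 - v <> 0) by lra.
  auto_derive.
  - repeat split; auto.
    replace ((2 + - v) * ((2 + - v) * 1)) with ((2 - v) ^ 2) by ring. field. repeat split; lra.
Qed.

Lemma I_exd k v : 0 < k -> 0 < v -> v <> 2 -> ex_derive (If k) v.
Proof.
  intros Hk Hv Hv2. unfold If, Qf, Ef.
  assert (H2 : 0 < (2 - v) ^ 2) by (apply pow2_gt_0 ; lra).
  assert (2 - v <> 0) by lra.
  auto_derive. repeat split; auto.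
  - apply Rmult_integral_contrapositive; split; [|lra]. apply Rmult_integral_contrapositive; split; lra.
  - apply Rgt_not_eq, exp_pos.
Qed.

Lemma is_derive_mult' (f g : R -> R) x a b l : is_derive f x a -> is_derive g x b ->
  l = a * g x + f x * b -> is_derive (fun y => f y * g y) x l.
Proof. intros Hf Hg ->. exact (is_derive_mult f g x a b Hf Hg Rmult_comm). Qed.

Lemma is_derive_comp' (f g : R -> R) x a b l : is_derive f (g x) a -> is_derive g x b ->
  l = b * a -> is_derive (fun y => f (g y)) x l.
Proof. intros Hf Hg ->. exact (is_derive_comp f g x a b Hf Hg). Qed.

Lemma G_deriv k m lo hi v : 0 < k -> lo < m < hi -> (forall w, lo < w < hi -> 0 < w /\ w <> 2) ->
  lo < v < hi -> is_derive (Gf k m) v (If k v).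
Proof.
  intros Hk Hm Hd Hv. unfold Gf.
  apply (is_derive_RInt (If k) (fun b => RInt (If k) m b) m).
  - apply (locally_interval _ v lo hi); [exact (proj1 Hv)| exact (proj2 Hv)|].
    intros y Hy1 Hy2. apply (RInt_correct (If k) m y). apply ex_RInt_continuous.
    intros z Hz.
    assert (lo < z < hi) by (unfold Rmin, Rmax in Hz; destruct Rle_dec; simpl in *; lra).
    destruct (Hd z H). exact (ex_derive_continuous (If k) z (I_exd k z Hk H0 H1)).
  - destruct (Hd v Hv). exact (ex_derive_continuous (If k) v (I_exd k v Hk H H0)).
Qed.

Lemma u_deriv k m lo hi v : 0 < k -> lo < m < hi -> (forall w, lo < w < hi -> 0 < w /\ w <> 2) ->
  lo < v < hi -> is_derive (uf k m) v (Rf k v * uf k m v + Qf k v).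
Proof.
  intros Hk Hm Hd Hv. destruct (Hd v Hv) as [Hv0 Hv2].
  unfold uf.
  assert (HE := E_deriv k v Hk Hv0 Hv2).
  assert (HG := G_deriv k m lo hi v Hk Hm Hd Hv).
  apply (is_derive_mult' _ _ _ _ _ _ HE HG).
  unfold If. assert (Ef k v <> 0) by (apply Rgt_not_eq, exp_pos). field. auto.
Qed.

Lemma inverse_thm (phi dphi : R -> R) (d : R) : 0 < d ->
  (forall t, -d <= t <= d -> derivable_pt_lim phi t (dphi t)) ->
  (forall t, -d <= t <= d -> 0 < dphi t) -> phi 0 = 0 ->
  exists g : R -> R, g 0 = 0 /\ phi (-d) < 0 /\ 0 < phi d /\
    forall y, phi (-d) < y < phi d ->
      -d <= g y <= d /\ phi (g y) = y /\ derivable_pt_lim g y (1 / dphi (g y)).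
Proof.
  intros Hd Hder Hpos H0.
  assert (Hincr : forall x y, -d <= x -> x < y -> y <= d -> phi x < phi y).
  { intros x y Hx Hxy Hy.
    apply (incr_function_le phi (-d) d dphi); simpl; auto.
    - intros z Hz1 Hz2. apply is_derive_Reals. apply Hder. lra.
    - intros z Hz1 Hz2. apply Hpos. lra. }
  assert (Hcont : forall x, -d <= x <= d -> continuity_pt phi x).
  { intros x Hx. apply derivable_continuous_pt. exists (dphi x). apply Hder; exact Hx. }
  assert (Hm : phi (-d) < 0) by (rewrite <- H0; apply Hincr; lra).
  assert (Hp : 0 < phi d) by (rewrite <- H0; apply Hincr; lra).
  set (g := fun y => epsilon (inhabits 0) (fun t => -d <= t <= d /\ phi t = y)).
  assert (Hg : forall y, phi (-d) <= y <= phi d -> -d <= g y <= d /\ phi (g y) = y).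
  { intros y Hy. unfold g. apply epsilon_spec.
    destruct (f_interv_is_interv phi (-d) d y ltac:(lra) Hy Hcont) as [x Hx].
    exists x; exact Hx. }
  clearbody g.
  assert (Hinj : forall x y, -d <= x <= d -> -d <= y <= d -> phi x = phi y -> x = y).
  { intros x y Hx Hy E. destruct (Rtotal_order x y) as [Hl|[Hl|Hl]]; auto.
    - pose proof (Hincr x y ltac:(lra) Hl ltac:(lra)); lra.
    - pose proof (Hincr y x ltac:(lra) Hl ltac:(lra)); lra. }
  assert (Hmono : forall y1 y2, phi (-d) <= y1 -> y1 <= y2 -> y2 <= phi d -> g y1 <= g y2).
  { intros y1 y2 H1 H12 H2.
    destruct (Hg y1 ltac:(lra)) as [A1 B1]. destruct (Hg y2 ltac:(lra)) as [A2 B2].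
    destruct (Rle_or_lt (g y1) (g y2)) as [L|L]; auto.
    pose proof (Hincr (g y2) (g y1) ltac:(lra) L ltac:(lra)). lra. }
  exists g. split.
  { destruct (Hg 0 ltac:(lra)) as [A B]. apply Hinj; auto; [lra| congruence]. }
  split; [exact Hm|]. split; [exact Hp|].
  intros y Hy.
  destruct (Hg y ltac:(lra)) as [A B].
  split; [exact A|]. split; [exact B|].
  assert (Hcg : continuity_pt g y).
  { apply (continuity_pt_recip_interv phi g (-d) d ltac:(lra)).
    - intros x z Hx Hxz Hz. apply Hincr; lra.
    - intros x Hx1 Hx2. unfold comp, id. apply Hg; lra.
    - intros x Hx1 Hx2. apply Hg; lra.
    - exact Hcont.
    - exact Hy. }
  destruct (Hg (phi (-d)) ltac:(lra)) as [Al Bl].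
  destruct (Hg (phi d) ltac:(lra)) as [Au Bu].
  assert (Prf : forall a, g (phi (-d)) <= a <= g (phi d) -> derivable_pt phi a).
  { intros a Ha. exists (dphi a). apply Hder. lra. }
  assert (Prg_incr : g (phi (-d)) <= g y <= g (phi d)).
  { split; apply Hmono; lra. }
  assert (Hlim : derivable_pt_lim phi (g y) (dphi (g y))) by (apply Hder; exact A).
  pose proof (derivable_pt_lim_recip_interv phi g (phi (-d)) (phi d) y Prf Hcg ltac:(lra) Hy Prg_incr) as HR.
  rewrite (derive_pt_eq_0 phi (g y) (dphi (g y)) (Prf (g y) Prg_incr) Hlim) in HR.
  apply HR.
  - intros x Hx. unfold comp, id. apply Hg; lra.
  - apply Rgt_not_eq. apply Hpos. exact A.
Qed.

Definition Dd k s v := /2 + (3 - k - v) * (s * s).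
Definition Hf k s v := k * s * v * (2 - v) / Dd k s v.

Lemma exist_sol k m : 1 <= k -> 0 < m -> m <> 2 -> exists Y, 0 < Y /\ exists V : R -> R, V 0 = m /\
  forall s, -Y < s < Y -> 0 < V s /\ V s <> 2 /\ Dd k s (V s) <> 0 /\ derivable_pt_lim V s (Hf k s (V s)).
Proof.
  intros Hk Hm Hm2.
  assert (Hs : exists sg, (sg = 1 \/ sg = -1) /\ 0 < sg * (2 - m)).
  { destruct (Rlt_dec m 2); [exists 1 | exists (-1)]; split; try lra.
    all: assert (m > 2) by (destruct (Rtotal_order m 2) as [?|[?|?]]; lra); lra. }
  destruct Hs as [sg [Hsg1 Hsg2]].
  set (r := Rmin m (Rabs (2 - m)) / 2).
  assert (Hr1 : r <= m / 2) by (unfold r; pose proof (Rmin_l m (Rabs (2 - m))); lra).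
  assert (Hr2 : r <= Rabs (2 - m) / 2) by (unfold r; pose proof (Rmin_r m (Rabs (2 - m))); lra).
  assert (Ha2 : 0 < Rabs (2 - m)) by (apply Rabs_pos_lt; lra).
  assert (Hr : 0 < r) by (unfold r; apply Rmult_lt_0_compat; [apply Rmin_pos; lra| lra]).
  assert (Hd : forall w, m - r < w < m + r -> 0 < w /\ w <> 2).
  { intros w Hw. split; [lra|]. intro E. subst w.
    unfold Rabs in *; destruct Rcase_abs; lra. }
  assert (Hst : forall t, Rabs t < r -> m - r < m + sg * t < m + r).
  { intros t Ht. unfold Rabs in Ht. destruct Rcase_abs; destruct Hsg1; subst sg; lra. }
  set (phi := fun t => uf k m (m + sg * t)).
  set (dphi := fun t => sg * (Rf k (m + sg * t) * uf k m (m + sg * t) + Qf k (m + sg * t))).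
  assert (Hk0 : 0 < k) by lra.
  assert (Hphid : forall t, Rabs t < r -> is_derive phi t (dphi t)).
  { intros t Ht. unfold phi, dphi.
    apply (is_derive_comp' (uf k m) (fun t => m + sg * t) t (Rf k (m + sg * t) * uf k m (m + sg * t) + Qf k (m + sg * t)) sg).
    - apply (u_deriv k m (m - r) (m + r)); [lra | lra | exact Hd | apply Hst; exact Ht].
    - auto_derive; [exact I| ring].
    - ring. }
  assert (Hdex : forall t, Rabs t < r -> ex_derive dphi t).
  { intros t Ht. 
    assert (Hu : ex_derive (uf k m) (m + sg * t)).
    { eexists. apply (u_deriv k m (m - r) (m + r)); [lra | lra | exact Hd | apply Hst; exact Ht]. }
    destruct (Hd (m + sg * t) (Hst t Ht)) as [Hv0 Hv2].
    unfold dphi, Rf, Qf. set (u := uf k m) in *. clearbody u.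
    auto_derive. repeat split; auto.
    - apply Rmult_integral_contrapositive; split; [|lra]. apply Rmult_integral_contrapositive; split; lra.
    - apply Rmult_integral_contrapositive; split; [|lra]. apply Rmult_integral_contrapositive; split; lra. }
  assert (Hu0 : uf k m m = 0) by (unfold uf, Gf; rewrite RInt_point; apply Rmult_0_r).
  assert (Hp0 : 0 < dphi 0).
  { unfold dphi. rewrite Rmult_0_r, Rplus_0_r, Hu0, Rmult_0_r, Rplus_0_l. unfold Qf.
    destruct Hsg1; subst sg.
    - rewrite Rmult_1_l. apply Rinv_0_lt_compat. apply Rmult_lt_0_compat; [apply Rmult_lt_0_compat|]; lra.
    - assert (0 < k * m * (m - 2)) by (apply Rmult_lt_0_compat; [apply Rmult_lt_0_compat|]; lra).
      replace (k * m * (2 - m)) with (- (k * m * (m - 2))) by ring.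
      rewrite <- Ropp_inv_permute by lra. 
      pose proof (Rinv_0_lt_compat _ H). lra. }
  assert (Hc : continuity_pt dphi 0).
  { apply continuity_pt_filterlim. exact (ex_derive_continuous dphi 0 (Hdex 0 ltac:(rewrite Rabs_R0; lra))). }
  destruct (Hc (dphi 0 / 2) ltac:(lra)) as [d0 [Hd0 Hd0']].
  set (d := Rmin d0 r / 2).
  assert (Hdpos : 0 < d) by (unfold d; apply Rmult_lt_0_compat; [apply Rmin_pos|]; lra).
  assert (Hdr : d < r) by (unfold d; pose proof (Rmin_r d0 r); lra).
  assert (Hdd0 : d < d0) by (unfold d; pose proof (Rmin_l d0 r); lra).
  assert (Habs : forall t, -d <= t <= d -> Rabs t < r /\ Rabs t < d0).
  { intros t Ht. unfold Rabs; destruct Rcase_abs; lra. }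
  assert (Hpos : forall t, -d <= t <= d -> 0 < dphi t).
  { intros t Ht. destruct (Req_dec t 0) as [->|Hne]; [exact Hp0|].
    assert (Hq : Rabs (dphi t - dphi 0) < dphi 0 / 2).
    { apply Hd0'. split; [split; [exact I| auto] |]. change (Rabs (t - 0) < d0). rewrite Rminus_0_r. apply Habs; auto. }
    apply Rabs_def2 in Hq. lra. }
  assert (Hder : forall t, -d <= t <= d -> derivable_pt_lim phi t (dphi t)).
  { intros t Ht. apply is_derive_Reals. apply Hphid. apply Habs; auto. }
  assert (Hphi0 : phi 0 = 0) by (unfold phi; rewrite Rmult_0_r, Rplus_0_r; exact Hu0).
  destruct (inverse_thm phi dphi d Hdpos Hder Hpos Hphi0) as [g [Hg0 [Hlb [Hub Hgy]]]].
  set (Y := Rmin 1 (phi d)).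
  assert (HY1 : Y <= 1) by apply Rmin_l.
  assert (HY2 : Y <= phi d) by apply Rmin_r.
  assert (HY : 0 < Y) by (apply Rmin_pos; lra).
  exists Y. split; [exact HY|].
  exists (fun s => m + sg * g (s * s)). split.
  { rewrite Rmult_0_r, Hg0. ring. }
  intros s Hs.
  assert (Hy : phi (-d) < s * s < phi d).
  { split; [nra|]. nra. }
  destruct (Hgy (s * s) Hy) as [Ht [Hphit Hgd]].
  set (t := g (s * s)) in *.
  set (v := m + sg * t).
  assert (Hvd : m - r < v < m + r) by (apply Hst; apply Habs; auto).
  destruct (Hd v Hvd) as [Hv0 Hv2].
  assert (Hdt : 0 < dphi t) by (apply Hpos; auto).
  assert (Huv : uf k m v = s * s) by exact Hphit.
  assert (Hrel : dphi t = sg * (Rf k v * (s * s) + Qf k v)) by (unfold dphi; fold v; rewrite Huv; reflexivity).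
  assert (HX : Rf k v * (s * s) + Qf k v <> 0).
  { intro E. rewrite E, Rmult_0_r in Hrel. lra. }
  assert (Hkv : k * v * (2 - v) <> 0).
  { apply Rmult_integral_contrapositive; split; [|lra]. apply Rmult_integral_contrapositive; split; lra. }
  assert (HDd : Dd k s v = (Rf k v * (s * s) + Qf k v) * (k * v * (2 - v)) / 2).
  { unfold Dd, Rf, Qf. field. split; [lra|]. split; lra. }
  assert (HDd0 : Dd k s v <> 0).
  { rewrite HDd. intro E. apply HX.
    apply (Rmult_eq_reg_r (k * v * (2 - v) / 2)); [| unfold Rdiv; apply Rmult_integral_contrapositive; split; [auto| lra]].
    lra. }
  split; [exact Hv0|]. split; [exact Hv2|]. split; [exact HDd0|].
  apply is_derive_Reals.
  assert (Hgd' : is_derive g (s * s) (1 / dphi t)) by (apply is_derive_Reals; exact Hgd).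
  assert (HD : is_derive (fun s => m + sg * g (s * s)) s (sg * (2 * s) * (1 / dphi t))).
  { auto_derive.
    - eexists; exact Hgd'.
    - replace (Derive (fun x => g x) (s * s)) with (1 / dphi t) by (symmetry; apply is_derive_unique; exact Hgd').
      ring. }
  replace (Hf k s v) with (sg * (2 * s) * (1 / dphi t)); [exact HD|].
  rewrite Hrel. unfold Hf. rewrite HDd.
  set (X := Rf k v * (s * s) + Qf k v) in *.
  assert (sg <> 0) by (destruct Hsg1; lra).
  field. repeat split; auto; lra.
Qed.

Definition H2f k s v :=
  k * v * (2 - v) / Dd k s v - k * s * v * (2 - v) * (2 * (3 - k - v) * s) / (Dd k s v * Dd k s v)
  + (k * s * (2 - 2 * v) / Dd k s v + k * s * v * (2 - v) * (s * s) / (Dd k s v * Dd k s v))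
    * (k * s * v * (2 - v) / Dd k s v).

Lemma H_deriv k (V : R -> R) s : is_derive V s (Hf k s (V s)) -> Dd k s (V s) <> 0 ->
  is_derive (fun s => Hf k s (V s)) s (H2f k s (V s)).
Proof.
  intros HV HD. unfold Hf, H2f in *. unfold Dd in *.
  auto_derive.
  - repeat split; auto; eexists; exact HV.
  - replace (Derive (fun x => V x) s) with (k * s * V s * (2 - V s) / (/ 2 + (3 - k - V s) * (s * s)))
      by (symmetry; apply is_derive_unique; exact HV).
    set (W := V s). set (d := / 2 + (3 - k - W) * (s * s)) in *.
    replace (/ 2 + (3 - k + - W) * (s * s)) with d by (unfold d; ring).
    field. auto.
Qed.

Lemma H2_cont k (V : R -> R) s : ex_derive V s -> Dd k s (V s) <> 0 ->
  continuity_pt (fun s => H2f k s (V s)) s.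
Proof.
  intros HV HD. apply continuity_pt_filterlim.
  apply (ex_derive_continuous (fun s => H2f k s (V s))).
  unfold H2f, Dd in *. auto_derive. repeat split; auto.
Qed.

Theorem lemma3p1 (N : nat) (HN : (3 <= N)%nat) (m : R) (Hm : 0 < m) :
  exists L : R, 0 < L /\
  exists V V1 V2 : R -> R,
    is_solution N m L V V1 V2 /\
    (forall W W1 W2 : R -> R, is_solution N m L W W1 W2 ->
       forall s, 0 <= s <= L -> W s = V s) /\
    V1 0 = 0 /\
    (forall s, 0 <= s <= L ->
       (2 - m) * V2 s >= (INR N - 2) * m * (2 - m) ^ 2).
Proof.
  pose proof (INR_ge3 N HN) as HN3.
  set (k := INR N - 2).
  assert (Hk1 : 1 <= k) by (unfold k; lra).
  assert (HLop : forall s v vs, Lop N s v vs = vs * Dd k s v - k * s * v * (2 - v)).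
  { intros. unfold Lop, Dd, k. ring. }
  set (L0 := / (2 * INR N)).
  assert (HL0 : 0 < L0) by (unfold L0; apply Rinv_0_lt_compat; lra).
  assert (HL0b : forall L, 0 < L -> L <= L0 -> INR N * L ^ 2 <= / 4).
  { intros L HL HLL.
    assert (L ^ 2 <= L0 ^ 2) by (apply pow_incr; lra).
    assert (E : INR N * L0 ^ 2 = / (4 * INR N)) by (unfold L0; field; lra).
    apply Rle_trans with (INR N * L0 ^ 2); [apply Rmult_le_compat_l; lra|].
    rewrite E. apply Rinv_le_contravar; lra. }
  destruct (Req_dec m 2) as [Hm2|Hm2].
  - subst m.
    assert (Hsol : is_solution N 2 L0 (fun _ => 2) (fun _ => 0) (fun _ => 0)).
    { split; [split; [|split]|split].
      - apply deriv_two_sided_on. intros; apply derivable_pt_lim_const.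
      - apply deriv_two_sided_on. intros; apply derivable_pt_lim_const.
      - apply cont_two_sided_on. intros; apply cpt_const.
      - reflexivity.
      - intros. unfold Lop. ring. }
    exists L0. split; [exact HL0|]. exists (fun _ => 2), (fun _ => 0), (fun _ => 0).
    split; [exact Hsol|]. split.
    { intros W W1 W2 HW s Hs. exact (uniq N 2 L0 W W1 W2 _ _ _ HN HL0 (HL0b L0 HL0 (Rle_refl _)) HW Hsol s Hs). }
    split; [reflexivity|]. intros s Hs. right. ring.
  - destruct (exist_sol k m Hk1 Hm Hm2) as [Y [HY [V [HV0 HVs]]]].
    set (V1 := fun s => Hf k s (V s)).
    set (V2 := fun s => H2f k s (V s)).
    assert (HVd : forall s, -Y < s < Y -> is_derive V s (V1 s)).
    { intros s Hs. apply is_derive_Reals. apply HVs; exact Hs. }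
    assert (HV1d : forall s, -Y < s < Y -> is_derive V1 s (V2 s)).
    { intros s Hs. apply H_deriv; [apply HVd; auto | apply HVs; auto]. }
    assert (HV2c : forall s, -Y < s < Y -> continuity_pt V2 s).
    { intros s Hs. apply H2_cont; [eexists; apply HVd; auto | apply HVs; auto]. }
    assert (Ha2 : 0 < Rabs (2 - m)) by (apply Rabs_pos_lt; lra).
    assert (Heps : 0 < k * m * Rabs (2 - m)) by (apply Rmult_lt_0_compat; [apply Rmult_lt_0_compat|]; lra).
    destruct (HV2c 0 ltac:(lra) _ Heps) as [dc [Hdc Hdc']].
    set (L := Rmin (Rmin (Y / 2) (dc / 2)) L0).
    assert (HLa : L <= Y / 2 /\ L <= dc / 2 /\ L <= L0).
    { unfold L. pose proof (Rmin_l (Rmin (Y / 2) (dc / 2)) L0). pose proof (Rmin_r (Rmin (Y / 2) (dc / 2)) L0).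
      pose proof (Rmin_l (Y / 2) (dc / 2)). pose proof (Rmin_r (Y / 2) (dc / 2)). lra. }
    assert (HL : 0 < L) by (unfold L; repeat apply Rmin_pos; lra).
    assert (Hin : forall s, 0 <= s <= L -> -Y < s < Y) by (intros; lra).
    assert (Hsol : is_solution N m L V V1 V2).
    { split; [split; [|split]|split].
      - apply deriv_two_sided_on. intros s Hs. apply is_derive_Reals. apply HVd; auto.
      - apply deriv_two_sided_on. intros s Hs. apply is_derive_Reals. apply HV1d; auto.
      - apply cont_two_sided_on. intros s Hs. apply HV2c; auto.
      - exact HV0.
      - intros s Hs. rewrite HLop. unfold V1, Hf.
        destruct (HVs s ltac:(lra)) as [_ [_ [HD _]]].
        field. exact HD. }
    exists L. split; [exact HL|]. exists V, V1, V2.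
    split; [exact Hsol|]. split.
    { intros W W1 W2 HW s Hs. exact (uniq N m L W W1 W2 _ _ _ HN HL (HL0b L HL (proj2 (proj2 HLa))) HW Hsol s Hs). }
    split.
    { unfold V1, Hf. unfold Rdiv. ring. }
    intros s Hs.
    assert (HV20 : V2 0 = 2 * k * m * (2 - m)).
    { unfold V2, H2f, Dd. rewrite HV0. field. }
    assert (Hq : Rabs (V2 s - V2 0) < k * m * Rabs (2 - m)).
    { destruct (Req_dec s 0) as [->|Hne].
      - rewrite Rminus_eq_0, Rabs_R0. exact Heps.
      - apply (Hdc' s). split; [split; [exact I| auto]|].
        change (Rabs (s - 0) < dc). rewrite Rminus_0_r, Rabs_right by lra. lra. }
    rewrite HV20 in Hq. fold k.
    apply Rle_ge.
    set (q := V2 s - 2 * k * m * (2 - m)) in Hq.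
    replace (V2 s) with (2 * k * m * (2 - m) + q) by (unfold q; ring).
    assert (Hkm : 0 < k * m) by (apply Rmult_lt_0_compat; lra).
    unfold Rabs in *; destruct (Rcase_abs (2 - m)); destruct (Rcase_abs q); nra.
Qed.
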